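(* In the 3-body problem in ${\bf S}^2$ with masses $m_1,m_2,m_3>0$, fix $z\in(-1,1)$ and $r=(1-z^2)^{1/2}$. There exists $\omega\neq 0$ such that ${\bf q}_i(t)=(r\cos(\omega t+\alpha_i), r\sin(\omega t+\alpha_i), z)$ with $\alpha_1=0,\alpha_2=2\pi/3,\alpha_3=4\pi/3$ is a solution of the equations of motion (i.e. the equilateral triangle in the plane $z=$ constant, given suitable initial velocities, rotates in its own plane as an elliptic relative equilibrium) if and only if $m_1=m_2=m_3$.
   Context: The $n$-body problem in ${\bf S}^2$: bodies of masses $m_1,\dots,m_n>0$ have positions ${\bf q}_i=(x_i,y_i,z_i)\in\mathbb R^3$ on the unit sphere ${\bf S}^2=\{{\bf q}:{\bf q}\cdot{\bf q}=1\}$ ($\cdot$ the Euclidean inner product), and satisfy $$\ddot{\bf q}_i=\sum_{j\ne i}\frac{m_j[{\bf q}_j-({\bf q}_i\cdot{\bf q}_j){\bf q}_i]}{[1-({\bf q}_i\cdot{\bf q}_j)^2]^{3/2}}-(\dot{\bf q}_i\cdot\dot{\bf q}_i){\bf q}_i,\qquad {\bf q}_i\cdot{\bf q}_i=1,\ \ {\bf q}_i\cdot\dot{\bf q}_i=0,$$ $i=1,\dots,n$, defined only for configurations with $({\bf q}_i\cdot{\bf q}_j)^2\ne 1$ for all $i\ne j$. *)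

(* Defs.v *)
From Stdlib Require Import Reals.
Open Scope R_scope.

Record V3 := mkV3 { vx : R; vy : R; vz : R }.

Definition vadd (a b : V3) : V3 := mkV3 (vx a + vx b) (vy a + vy b) (vz a + vz b).
Definition vsub (a b : V3) : V3 := mkV3 (vx a - vx b) (vy a - vy b) (vz a - vz b).
Definition vscale (c : R) (a : V3) : V3 := mkV3 (c * vx a) (c * vy a) (c * vz a).
Definition vdot (a b : V3) : R := vx a * vx b + vy a * vy b + vz a * vz b.
Definition vzero : V3 := mkV3 0 0 0.

Fixpoint vsum (n : nat) (f : nat -> V3) : V3 :=
  match n with
  | O => vzero
  | S k => vadd (vsum k f) (f k)
  end.

Definition has_deriv3 (p : R -> V3) (t : R) (d : V3) : Prop :=
  derivable_pt_lim (fun s => vx (p s)) t (vx d) /\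
  derivable_pt_lim (fun s => vy (p s)) t (vy d) /\
  derivable_pt_lim (fun s => vz (p s)) t (vz d).

Definition force (n : nat) (m : nat -> R) (q : nat -> V3) (i : nat) : V3 :=
  vsum n (fun j =>
    if Nat.eqb j i then vzero
    else vscale (m j / (sqrt (1 - (vdot (q i) (q j))^2))^3)
                (vsub (q j) (vscale (vdot (q i) (q j)) (q i)))).

Definition is_solution (n : nat) (m : nat -> R) (q : nat -> R -> V3) : Prop :=
  exists v a : nat -> R -> V3,
    forall (i : nat) (t : R), (i < n)%nat ->
      has_deriv3 (q i) t (v i t) /\
      has_deriv3 (v i) t (a i t) /\
      vdot (q i t) (q i t) = 1 /\
      vdot (q i t) (v i t) = 0 /\
      (forall j : nat, (j < n)%nat -> j <> i -> (vdot (q i t) (q j t))^2 <> 1) /\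
      a i t = vsub (force n m (fun j => q j t) i)
                   (vscale (vdot (v i t) (v i t)) (q i t)).

(* alpha_i for bodies 0,1,2 (i.e. bodies 1,2,3 of the paper): 0, 2pi/3, 4pi/3 *)
Definition alpha (i : nat) : R := 2 * PI * INR i / 3.

Definition rot_triangle (z w : R) (i : nat) (t : R) : V3 :=
  mkV3 (sqrt (1 - z^2) * cos (w * t + alpha i))
       (sqrt (1 - z^2) * sin (w * t + alpha i)) z.

(* Main.v *)
Require Import Defs.
From Stdlib Require Import Reals Lra Psatz FunctionalExtensionality.
Open Scope R_scope.
Lemma dl_eq f x l l' : derivable_pt_lim f x l -> l = l' -> derivable_pt_lim f x l'.
Proof. intros H ->; exact H. Qed.
Lemma lin_d w a t : derivable_pt_lim (fun s => w*s+a) t w.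
Proof.
  eapply dl_eq.
  apply (derivable_pt_lim_plus (fun s => w*s) (fun _ => a)).
  - apply (derivable_pt_lim_scal id). apply derivable_pt_lim_id.
  - apply derivable_pt_lim_const.
  - ring.
Qed.
Lemma dcos k w a t : derivable_pt_lim (fun s => k * cos(w*s+a)) t (-(k*w)*sin(w*t+a)).
Proof.
  eapply dl_eq.
  apply (derivable_pt_lim_scal (fun s => cos (w*s+a))).
  apply (derivable_pt_lim_comp (fun s => w*s+a) cos).
  - apply lin_d.
  - apply derivable_pt_lim_cos.
  - ring.
Qed.
Lemma dsin k w a t : derivable_pt_lim (fun s => k * sin(w*s+a)) t ((k*w)*cos(w*t+a)).
Proof.
  eapply dl_eq.
  apply (derivable_pt_lim_scal (fun s => sin (w*s+a))).
  apply (derivable_pt_lim_comp (fun s => w*s+a) sin).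
  - apply lin_d.
  - apply derivable_pt_lim_sin.
  - ring.
Qed.
Lemma a0 : alpha 0 = 0. Proof. unfold alpha; simpl; field. Qed.
Lemma a1 : alpha 1 = 2*PI/3. Proof. unfold alpha; simpl; field. Qed.
Lemma a2 : alpha 2 = 4*PI/3. Proof. unfold alpha; simpl; field. Qed.
Lemma c23 : cos (2*PI/3) = -1/2.
Proof. replace (2*PI/3) with (2*(PI/3)) by field. apply cos_2PI3. Qed.
Lemma s23 : sin (2*PI/3) = sqrt 3/2.
Proof. replace (2*PI/3) with (2*(PI/3)) by field. apply sin_2PI3. Qed.
Lemma c43 : cos (4*PI/3) = -1/2.
Proof. replace (4*PI/3) with (PI/3+PI) by field. rewrite neg_cos, cos_PI3. field. Qed.
Lemma s43 : sin (4*PI/3) = - (sqrt 3/2).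
Proof. replace (4*PI/3) with (PI/3+PI) by field. rewrite neg_sin, sin_PI3. field. Qed.
Lemma cdiff i j : (i<3)%nat -> (j<3)%nat -> i<>j -> cos (alpha i - alpha j) = -1/2.
Proof.
  intros Hi Hj Hij.
  destruct i as [|[|[|i]]]; try lia; destruct j as [|[|[|j]]]; try lia;
  rewrite ?a0, ?a1, ?a2.
  - replace (0 - 2*PI/3) with (-(2*PI/3)) by ring. rewrite cos_neg. apply c23.
  - replace (0 - 4*PI/3) with (-(4*PI/3)) by ring. rewrite cos_neg. apply c43.
  - replace (2*PI/3 - 0) with (2*PI/3) by ring. apply c23.
  - replace (2*PI/3 - 4*PI/3) with (-(2*PI/3)) by field. rewrite cos_neg. apply c23.
  - replace (4*PI/3 - 0) with (4*PI/3) by ring. apply c43.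
  - replace (4*PI/3 - 2*PI/3) with (2*PI/3) by field. apply c23.
Qed.
Lemma dot_rot z w i j t : -1 < z < 1 -> (i<3)%nat -> (j<3)%nat -> i<>j ->
  vdot (rot_triangle z w i t) (rot_triangle z w j t) = (1 - z^2)*(-1/2) + z^2.
Proof.
  intros Hz Hi Hj Hij. unfold vdot, rot_triangle; cbn [vx vy vz].
  rewrite <- (cdiff i j Hi Hj Hij).
  replace (alpha i - alpha j) with ((w*t + alpha i) - (w*t+alpha j)) by ring.
  rewrite cos_minus.
  assert (H: sqrt (1 - z^2) * sqrt (1-z^2) = 1 - z^2) by (apply sqrt_sqrt; nra).
  transitivity (sqrt (1 - z^2) * sqrt (1-z^2) * (cos (w * t + alpha i) * cos (w * t + alpha j) +
    sin (w * t + alpha i) * sin (w * t + alpha j)) + z^2); [ring|]. rewrite H. ring.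
Qed.
Lemma yeq m z w v a i t :
  (forall (i : nat) (t : R), (i < 3)%nat ->
      has_deriv3 (rot_triangle z w i) t (v i t) /\
      has_deriv3 (v i) t (a i t) /\
      vdot (rot_triangle z w i t) (rot_triangle z w i t) = 1 /\
      vdot (rot_triangle z w i t) (v i t) = 0 /\
      (forall j : nat, (j < 3)%nat -> j <> i -> (vdot (rot_triangle z w i t) (rot_triangle z w j t))^2 <> 1) /\
      a i t = vsub (force 3 m (fun j => rot_triangle z w j t) i)
                   (vscale (vdot (v i t) (v i t)) (rot_triangle z w i t))) ->
  (i < 3)%nat ->
  -(sqrt(1-z^2)*w*w)*sin(w*t+alpha i) =
  vy (force 3 m (fun j => rot_triangle z w j t) i) - vdot (v i t) (v i t) * (sqrt(1-z^2)*sin(w*t+alpha i)).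
Proof.
  intros H Hi.
  assert (Hv : forall s, vy (v i s) = (sqrt(1-z^2)*w)*cos(w*s+alpha i)).
  { intro s. destruct (H i s Hi) as [[_ [Hy _]] _].
    apply (uniqueness_limite _ s _ _ Hy (dsin _ _ _ _)). }
  destruct (H i t Hi) as [_ [[_ [Hy _]] [_ [_ [_ He]]]]].
  assert (Hf : (fun s => vy (v i s)) = (fun s => (sqrt(1-z^2)*w)*cos(w*s+alpha i))).
  { apply functional_extensionality. exact Hv. }
  rewrite Hf in Hy.
  pose proof (uniqueness_limite _ t _ _ Hy (dcos _ _ _ _)) as Ha.
  apply (f_equal vy) in He. rewrite Ha in He. cbn [vy vsub vscale rot_triangle] in He.
  rewrite He. ring.
Qed.
Lemma c_bound z : -1 < z < 1 -> ((1 - z^2)*(-1/2) + z^2)^2 < 1.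
Proof. intros Hz. assert (H1: z^2 < 1) by nra. assert (H2: 0 <= z^2) by nra.
  set (u := z^2) in *. assert (0 < (3*u+1)/2) by lra. assert (0 < (3 - 3*u)/2) by lra.
  assert (0 < (3*u+1)/2 * ((3 - 3*u)/2)) by (apply Rmult_lt_0_compat; lra). nra. Qed.
Lemma D_pos z : -1 < z < 1 -> 0 < sqrt (1 - ((1 - z^2)*(-1/2) + z^2)^2) ^ 3.
Proof. intros Hz. pose proof (c_bound z Hz). apply pow_lt. apply sqrt_lt_R0. lra. Qed.

Lemma fwd m z (hz : -1 < z < 1) :
  (exists w : R, w <> 0 /\ is_solution 3 m (rot_triangle z w)) ->
  (m 0%nat = m 1%nat /\ m 1%nat = m 2%nat).
Proof.
  intros [w [Hw [v [a H]]]].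
  assert (Hr : 0 < sqrt (1 - z^2)) by (apply sqrt_lt_R0; nra).
  pose proof (D_pos z hz) as HD.
  assert (H3 : 0 < sqrt 3 / 2) by (apply Rdiv_lt_0_compat; [apply sqrt_lt_R0|]; lra).
  set (r := sqrt (1 - z^2)) in *.
  set (D := sqrt (1 - ((1 - z^2)*(-1/2) + z^2)^2) ^ 3) in *.
  pose proof (yeq m z w v a 0 0 H ltac:(lia)) as E0.
  pose proof (yeq m z w v a 1 (- alpha 1 / w) H ltac:(lia)) as E1.
  unfold force in E0, E1; cbn [vsum vadd vsub vscale vzero vy Nat.eqb] in E0, E1.
  rewrite !dot_rot in E0, E1 by (auto; lia).
  unfold rot_triangle in E0, E1; cbn [vy] in E0, E1. fold r in E0, E1. fold D in E0, E1.
  rewrite Rmult_0_r, !Rplus_0_l in E0.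
  replace (w * (- alpha 1 / w) + alpha 0) with (-(2*PI/3)) in E1 by (rewrite a0, a1; field; auto).
  replace (w * (- alpha 1 / w) + alpha 1) with 0 in E1 by (field; auto).
  replace (w * (- alpha 1 / w) + alpha 2) with (2*PI/3) in E1 by (rewrite a1, a2; field; auto).
  rewrite a0, a1, a2, sin_0, s23, s43 in E0.
  rewrite sin_neg, sin_0, s23 in E1.
  assert (K0 : (m 1%nat - m 2%nat) * (r * (sqrt 3/2) / D) = 0).
  { match type of E0 with ?L = ?R => transitivity (R - L); [unfold Rdiv; ring | rewrite <- E0; ring] end. }
  assert (K1 : (m 2%nat - m 0%nat) * (r * (sqrt 3/2) / D) = 0).
  { match type of E1 with ?L = ?R => transitivity (R - L); [unfold Rdiv; ring | rewrite <- E1; ring] end. }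
  assert (P : r * (sqrt 3 / 2) / D <> 0).
  { apply Rgt_not_eq, Rdiv_lt_0_compat; [apply Rmult_lt_0_compat|]; lra. }
  apply Rmult_integral in K0; apply Rmult_integral in K1.
  destruct K0 as [K0|K0]; [|contradiction]; destruct K1 as [K1|K1]; [|contradiction].
  split; lra.
Qed.
Lemma bwd m z (hz : -1 < z < 1) (hm0 : 0 < m 0%nat) :
  (m 0%nat = m 1%nat /\ m 1%nat = m 2%nat) ->
  (exists w : R, w <> 0 /\ is_solution 3 m (rot_triangle z w)).
Proof.
  intros [E01 E12].
  assert (Hr : 0 < sqrt (1 - z^2)) by (apply sqrt_lt_R0; nra).
  assert (Hrr : sqrt (1 - z^2) * sqrt (1 - z^2) = 1 - z^2) by (apply sqrt_sqrt; nra).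
  pose proof (D_pos z hz) as HD.
  pose proof (c_bound z hz) as Hc.
  set (r := sqrt (1 - z^2)) in *.
  set (D := sqrt (1 - ((1 - z^2)*(-1/2) + z^2)^2) ^ 3) in *.
  set (K := m 0%nat / D).
  assert (HK : 0 < K) by (apply Rdiv_lt_0_compat; lra).
  set (w := sqrt (3*K)).
  assert (Hww : w * w = 3*K) by (apply sqrt_sqrt; lra).
  assert (Hw : 0 < w) by (apply sqrt_lt_R0; lra).
  exists w. split; [lra|].
  exists (fun i t => mkV3 (-(r*w)*sin(w*t+alpha i)) ((r*w)*cos(w*t+alpha i)) 0).
  exists (fun i t => mkV3 (-(r*w)*w*cos(w*t+alpha i)) (-((r*w)*w)*sin(w*t+alpha i)) 0).
  intros i t Hi. cbv beta.
  assert (Hvv : forall th, vdot (mkV3 (-(r*w)*sin th) ((r*w)*cos th) 0)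
                 (mkV3 (-(r*w)*sin th) ((r*w)*cos th) 0) = r*r*(w*w)).
  { intro th. unfold vdot; cbn [vx vy vz].
    transitivity (r*r*(w*w)*(Rsqr (sin th) + Rsqr (cos th))); [unfold Rsqr; ring|]. rewrite sin2_cos2. ring. }
  repeat split.
  - unfold rot_triangle; cbn [vx vy vz]. apply dcos.
  - unfold rot_triangle; cbn [vx vy vz]. apply dsin.
  - unfold rot_triangle; cbn [vx vy vz]. apply derivable_pt_lim_const.
  - cbn [vx vy vz]. apply dsin.
  - cbn [vx vy vz]. apply dcos.
  - cbn [vx vy vz]. apply derivable_pt_lim_const.
  - unfold vdot, rot_triangle; cbn [vx vy vz]. fold r.
    transitivity (r*r*(Rsqr (sin (w*t+alpha i)) + Rsqr (cos (w*t+alpha i))) + z*z); [unfold Rsqr; ring|].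
    rewrite sin2_cos2, Hrr. ring.
  - unfold vdot, rot_triangle; cbn [vx vy vz]. ring.
  - intros j Hj Hji. rewrite dot_rot by (auto; lia). lra.
  - rewrite Hvv, Hww.
    destruct i as [|[|[|i]]]; try lia;
    unfold force; cbn [vsum vadd vsub vscale vzero Nat.eqb];
    rewrite !dot_rot by (auto; lia);
    unfold rot_triangle, vsub, vadd, vscale, vzero; cbn [vx vy vz]; fold r; rewrite <- ?E12, <- ?E01; fold D; fold K; rewrite ?(Rmult_assoc r w w), Hww; f_equal; rewrite ?a0, ?a1, ?a2;
 rewrite ?cos_plus, ?sin_plus, ?c23, ?s23, ?c43, ?s43, ?cos_0, ?sin_0;
 try replace (-(r*w)*w) with (-(r*(3*K))) by (rewrite <- Hww; ring); replace (z^2) with (1 - r*r) by (rewrite Hrr; ring). all: field.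
    all: try replace (-(r*w)*w) with (-(r*(3*K))) by (rewrite <- Hww; ring); replace (z^2) with (1 - r*r) by (rewrite Hrr; ring). all: field.
Qed.

Theorem mainTheorem9 (m : nat -> R) (z : R)
  (hm0 : 0 < m 0%nat) (hm1 : 0 < m 1%nat) (hm2 : 0 < m 2%nat)
  (hz : -1 < z < 1) :
  (exists w : R, w <> 0 /\ is_solution 3 m (rot_triangle z w)) <->
  (m 0%nat = m 1%nat /\ m 1%nat = m 2%nat).
Proof.
  split; [apply fwd; exact hz | apply bwd; assumption].
Qed.
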